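(* The spaces $T(\mathbf I)$ and $\overline{T(\mathbf I)}$ are topologically complete (completely metrizable).
   Context: $\mathbf I=[0,1]$; $C(\mathbf I)$ is the space of continuous self-maps of $\mathbf I$ with the supremum metric; $T(\mathbf I)$ is the set of transitive maps ($f$ is transitive if for all non-empty open $U,V\subset\mathbf I$ there is $n\ge1$ with $U\cap f^{-n}(V)\ne\emptyset$) and $\overline{T(\mathbf I)}$ its closure in $C(\mathbf I)$. *)

(* Defs.v *)
From Stdlib Require Import Reals Lra.
Open Scope R_scope.

Definition inI (x : R) : Prop := 0 <= x <= 1.

(* f : R -> R represents a self-map of I (values outside I are irrelevant);
   f is in C(I) iff it maps I into I and is continuous on I. *)
Definition inC (f : R -> R) : Prop :=
  (forall x, inI x -> inI (f x)) /\
  (forall x, inI x -> forall eps, 0 < eps ->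
     exists delta, 0 < delta /\
       forall y, inI y -> Rabs (y - x) < delta -> Rabs (f y - f x) < eps).

Definition openI (U : R -> Prop) : Prop :=
  (forall x, U x -> inI x) /\
  (forall x, U x -> exists r, 0 < r /\
     forall y, inI y -> Rabs (y - x) < r -> U y).

Definition transitive (f : R -> R) : Prop :=
  forall U V : R -> Prop, openI U -> openI V ->
    (exists x, U x) -> (exists y, V y) ->
    exists n : nat, (1 <= n)%nat /\ exists x, U x /\ V (Nat.iter n f x).

Definition TI (f : R -> R) : Prop := inC f /\ transitive f.

Definition sup_close (f g : R -> R) (eps : R) : Prop :=
  forall x, inI x -> Rabs (f x - g x) <= eps.

Definition TI_closure (f : R -> R) : Prop :=
  inC f /\ forall eps, 0 < eps -> exists g, TI g /\ sup_close f g eps.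

(* Functions are identified when they agree on I. *)
Definition eqI (f g : R -> R) : Prop := forall x, inI x -> f x = g x.

Definition completely_metrizable (S : (R -> R) -> Prop) : Prop :=
  exists d : (R -> R) -> (R -> R) -> R,
    (forall f g, S f -> S g -> 0 <= d f g) /\
    (forall f g, S f -> S g -> (d f g = 0 <-> eqI f g)) /\
    (forall f g, S f -> S g -> d f g = d g f) /\
    (forall f g h, S f -> S g -> S h -> d f h <= d f g + d g h) /\
    (forall f, S f -> forall eps, 0 < eps -> exists delta, 0 < delta /\
        forall g, S g -> sup_close f g delta -> d f g < eps) /\
    (forall f, S f -> forall eps, 0 < eps -> exists delta, 0 < delta /\
        forall g, S g -> d f g < delta -> sup_close f g eps) /\
    (forall u : nat -> (R -> R), (forall n, S (u n)) ->
       (forall eps, 0 < eps -> exists N, forall m n, (N <= m)%nat -> (N <= n)%nat ->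
           d (u m) (u n) < eps) ->
       exists g, S g /\ forall eps, 0 < eps -> exists N, forall n, (N <= n)%nat ->
           d (u n) g < eps).

(* Main.v *)
Require Import Defs.
From Stdlib Require Import Reals.
From Stdlib Require Import Lra Lia ClassicalEpsilon Classical Cantor ZArith.
Open Scope R_scope.

Definition Sup (P : R -> Prop) : R :=
  match excluded_middle_informative (bound P /\ exists x, P x) with
  | left H => proj1_sig (completeness P (proj1 H) (proj2 H))
  | right _ => 0
  end.

Lemma Sup_ub P B r : (forall x, P x -> x <= B) -> P r -> r <= Sup P.
Proof.
  intros HB Hr. unfold Sup.
  destruct (excluded_middle_informative _) as [H|H].
  - destruct (completeness _ _ _) as [s [Hs1 Hs2]]; simpl. apply Hs1; auto.
  - exfalso; apply H; split; [exists B; intros x Hx; auto | eauto].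
Qed.

Lemma Sup_le P B : (exists r, P r) -> (forall x, P x -> x <= B) -> Sup P <= B.
Proof.
  intros Hne HB. unfold Sup.
  destruct (excluded_middle_informative _) as [H|H].
  - destruct (completeness _ _ _) as [s [Hs1 Hs2]]; simpl. apply Hs2.
    intros x Hx; auto.
  - exfalso; apply H; split; [exists B; intros x Hx; auto | eauto].
Qed.

Lemma Sup_nonneg P : (exists r, P r) -> (forall x, P x -> 0 <= x) -> 0 <= Sup P.
Proof.
  intros [r Hr] H0. unfold Sup.
  destruct (excluded_middle_informative _) as [H|H].
  - destruct (completeness _ _ _) as [s [Hs1 Hs2]]; simpl.
    apply Rle_trans with r; auto.
  - lra.
Qed.

Lemma Sup_pos P B : (forall x, P x -> x <= B) -> 0 < Sup P -> exists r, P r /\ 0 < r.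
Proof.
  intros HB Hp. apply NNPP; intro Hn.
  assert (Hne : exists r, P r).
  { unfold Sup in Hp. destruct (excluded_middle_informative _) as [H|H].
    - apply (proj2 H).
    - lra. }
  assert (Sup P <= 0).
  { apply Sup_le; auto. intros x Hx. destruct (Rle_dec x 0); auto.
    exfalso; apply Hn; exists x; split; auto; lra. }
  lra.
Qed.

Definition D (f g : R -> R) : R :=
  Sup (fun r => exists x, inI x /\ r = Rabs (f x - g x)).

Lemma inI0 : inI 0. Proof. unfold inI; lra. Qed.

Lemma inC_abs f g x : inC f -> inC g -> inI x -> Rabs (f x - g x) <= 1.
Proof.
  intros [Hf _] [Hg _] Hx. specialize (Hf x Hx). specialize (Hg x Hx).
  unfold inI in *. apply Rabs_le; lra.
Qed.

Lemma D_ub f g x : inC f -> inC g -> inI x -> Rabs (f x - g x) <= D f g.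
Proof.
  intros Hf Hg Hx. unfold D. apply Sup_ub with 1.
  - intros r [y [Hy ->]]. apply inC_abs; auto.
  - eauto.
Qed.

Lemma D_le f g B : (forall x, inI x -> Rabs (f x - g x) <= B) -> D f g <= B.
Proof.
  intros H. unfold D. apply Sup_le.
  - exists (Rabs (f 0 - g 0)). exists 0. split; auto. apply inI0.
  - intros r [y [Hy ->]]. auto.
Qed.

Lemma D_nonneg f g : 0 <= D f g.
Proof.
  unfold D. apply Sup_nonneg.
  - exists (Rabs (f 0 - g 0)). exists 0. split; auto. apply inI0.
  - intros r [y [Hy ->]]. apply Rabs_pos.
Qed.

Lemma D_sym f g : inC f -> inC g -> D f g = D g f.
Proof.
  intros Hf Hg. apply Rle_antisym; apply D_le; intros x Hx;
  rewrite Rabs_minus_sym; apply D_ub; auto.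
Qed.

Lemma D_tri f g h : inC f -> inC g -> inC h -> D f h <= D f g + D g h.
Proof.
  intros Hf Hg Hh. apply D_le; intros x Hx.
  replace (f x - h x) with ((f x - g x) + (g x - h x)) by ring.
  eapply Rle_trans; [apply Rabs_triang|].
  apply Rplus_le_compat; apply D_ub; auto.
Qed.

Lemma D_self f : D f f = 0.
Proof.
  apply Rle_antisym; [|apply D_nonneg]. apply D_le; intros.
  rewrite Rminus_diag, Rabs_R0; lra.
Qed.

Lemma D_eqI f g : inC f -> inC g -> (D f g = 0 <-> eqI f g).
Proof.
  intros Hf Hg; split.
  - intros H x Hx. pose proof (D_ub f g x Hf Hg Hx). rewrite H in H0.
    pose proof (Rabs_pos (f x - g x)).
    assert (Rabs (f x - g x) = 0) by lra.
    apply Rminus_diag_uniq. destruct (Req_dec (f x - g x) 0); auto.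
    exfalso; apply Rabs_no_R0 in H3; auto.
  - intros H. apply Rle_antisym; [|apply D_nonneg]. apply D_le; intros x Hx.
    rewrite H, Rminus_diag, Rabs_R0 by auto; lra.
Qed.

Lemma Rabs_le_between a b : Rabs a <= b -> -b <= a <= b.
Proof. unfold Rabs; destruct (Rcase_abs a); lra. Qed.
Lemma Rabs_lt_between a b : Rabs a < b -> -b < a < b.
Proof. unfold Rabs; destruct (Rcase_abs a); lra. Qed.

Definition limf (u : nat -> R -> R) (x : R) : R :=
  match excluded_middle_informative (Cauchy_crit (fun n => u n x)) with
  | left H => proj1_sig (R_complete _ H)
  | right _ => 0
  end.

Lemma limf_cv u x : Cauchy_crit (fun n => u n x) -> Un_cv (fun n => u n x) (limf u x).
Proof.
  intros H. unfold limf. destruct (excluded_middle_informative _) as [H'|H'].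
  - destruct (R_complete _ H'); simpl; auto.
  - contradiction.
Qed.

Lemma complete_C (u : nat -> R -> R) :
  (forall n, inC (u n)) ->
  (forall eps, 0 < eps -> exists N, forall m n, (N <= m)%nat -> (N <= n)%nat -> D (u m) (u n) < eps) ->
  inC (limf u) /\
  (forall eps, 0 < eps -> exists N, forall n, (N <= n)%nat -> forall x, inI x ->
       Rabs (u n x - limf u x) <= eps).
Proof.
  intros HC Hc.
  assert (Hcv : forall x, inI x -> Un_cv (fun n => u n x) (limf u x)).
  { intros x Hx. apply limf_cv. intros eps He. destruct (Hc eps He) as [N HN].
    exists N. intros n m Hn Hm. unfold R_dist.
    eapply Rle_lt_trans; [apply D_ub; auto| apply HN; auto]. }
  assert (Hunif : forall eps, 0 < eps -> exists N, forall n, (N <= n)%nat -> forall x, inI x ->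
       Rabs (u n x - limf u x) <= eps).
  { intros eps He. destruct (Hc eps He) as [N HN]. exists N. intros n Hn x Hx.
    apply Rnot_lt_le; intro Hlt.
    set (a := Rabs (u n x - limf u x) - eps).
    destruct (Hcv x Hx a ltac:(unfold a; lra)) as [M HM].
    pose (m := max N M).
    specialize (HM m ltac:(unfold m; lia)). unfold R_dist in HM.
    specialize (HN n m Hn ltac:(unfold m; lia)).
    pose proof (D_ub (u n) (u m) x (HC n) (HC m) Hx).
    pose proof (Rabs_triang (u n x - u m x) (u m x - limf u x)).
    replace (u n x - u m x + (u m x - limf u x)) with (u n x - limf u x) in H0 by ring.
    unfold a in HM. lra. }
  split; auto.
  split.
  - intros x Hx. split.
    + apply Rnot_lt_le; intro Hlt.
      destruct (Hunif (- limf u x / 2) ltac:(lra)) as [N HN].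
      specialize (HN N (le_n _) x Hx). destruct (HC N) as [HI _].
      specialize (HI x Hx). unfold inI in HI.
      apply Rabs_le_between in HN. lra.
    + apply Rnot_lt_le; intro Hlt.
      destruct (Hunif ((limf u x - 1) / 2) ltac:(lra)) as [N HN].
      specialize (HN N (le_n _) x Hx). destruct (HC N) as [HI _].
      specialize (HI x Hx). unfold inI in HI.
      apply Rabs_le_between in HN. lra.
  - intros x Hx eps He.
    destruct (Hunif (eps/4) ltac:(lra)) as [N HN].
    destruct (HC N) as [_ Hcont].
    destruct (Hcont x Hx (eps/4) ltac:(lra)) as [del [Hd Hdel]].
    exists del; split; auto. intros y Hy Hyx.
    specialize (Hdel y Hy Hyx).
    pose proof (HN N (le_n _) x Hx). pose proof (HN N (le_n _) y Hy).
    apply Rabs_lt_between in Hdel.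
    apply Rabs_le_between in H. apply Rabs_le_between in H0.
    apply Rabs_def1; lra.
Qed.

Lemma D_sup_close f g eps : inC f -> inC g -> D f g <= eps -> sup_close f g eps.
Proof. intros Hf Hg H x Hx. eapply Rle_trans; [apply D_ub|]; eauto. Qed.

Lemma sup_close_D f g eps : sup_close f g eps -> D f g <= eps.
Proof. intros H. apply D_le. auto. Qed.

Lemma closure_cm : completely_metrizable TI_closure.
Proof.
  exists D.
  assert (HC : forall f, TI_closure f -> inC f) by (intros f [H _]; auto).
  split; [intros; apply D_nonneg|].
  split; [intros; apply D_eqI; auto|].
  split; [intros; apply D_sym; auto|].
  split; [intros; apply D_tri; auto|].
  split.
  { intros f Hf eps He. exists (eps/2); split; [lra|].
    intros g Hg Hc. apply sup_close_D in Hc. lra. }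
  split.
  { intros f Hf eps He. exists eps; split; [lra|].
    intros g Hg Hc. apply D_sup_close; auto. lra. }
  intros u Hu Hc.
  destruct (complete_C u (fun n => HC _ (Hu n)) Hc) as [Hg Hunif].
  exists (limf u). split.
  - split; auto. intros eps He.
    destruct (Hunif (eps/2) ltac:(lra)) as [N HN].
    destruct (Hu N) as [_ Hclos]. destruct (Hclos (eps/2) ltac:(lra)) as [h [Hh Hch]].
    exists h. split; auto. intros x Hx.
    specialize (HN N (le_n _) x Hx). specialize (Hch x Hx).
    replace (limf u x - h x) with ((u N x - h x) - (u N x - limf u x)) by ring.
    eapply Rle_trans; [apply Rabs_triang|]. rewrite Rabs_Ropp. lra.
  - intros eps He. destruct (Hunif (eps/2) ltac:(lra)) as [N HN].
    exists N. intros n Hn. assert (D (u n) (limf u) <= eps/2) by (apply D_le; auto). lra.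
Qed.

Definition Bs (a : nat * nat) (y : R) : Prop :=
  inI y /\ Rabs (y - INR (fst a) * / INR (S (snd a))) < / INR (S (snd a)).

Lemma INRS_pos n : 0 < INR (S n).
Proof. apply lt_0_INR; lia. Qed.

Lemma Bs_open a : openI (Bs a).
Proof.
  split; [intros x [H _]; auto|].
  intros x [Hx Hc]. exists (/ INR (S (snd a)) - Rabs (x - INR (fst a) * / INR (S (snd a)))).
  split; [lra|]. intros y Hy Hyx. split; auto.
  replace (y - INR (fst a) * / INR (S (snd a))) with ((y - x) + (x - INR (fst a) * / INR (S (snd a)))) by ring.
  eapply Rle_lt_trans; [apply Rabs_triang|]. lra.
Qed.

Lemma floor_nat z : 0 <= z -> exists p : nat, INR p <= z < INR p + 1.
Proof.
  intros Hz. destruct (archimed z) as [H1 H2].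
  assert (Hpos : (0 < up z)%Z) by (apply lt_IZR; lra).
  exists (Z.to_nat (up z - 1)).
  rewrite INR_IZR_INZ, Z2Nat.id by lia. rewrite minus_IZR. simpl. lra.
Qed.

Lemma basis U : openI U -> (exists x, U x) ->
  exists a, openI (Bs a) /\ (exists y, Bs a y) /\ (forall y, Bs a y -> U y).
Proof.
  intros [HUI HUo] [x Hx]. destruct (HUo x Hx) as [r [Hr Hball]].
  destruct (archimed_cor1 (r/2) ltac:(lra)) as [N [HN HN0]].
  assert (HxI := HUI x Hx).
  set (t := / INR N).
  assert (HNpos : 0 < INR N) by (apply lt_0_INR; lia).
  assert (Ht : 0 < t) by (unfold t; apply Rinv_0_lt_compat; auto).
  assert (HNt : INR N * t = 1) by (unfold t; field; lra).
  destruct (floor_nat (x * INR N)) as [p Hp].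
  { unfold inI in HxI. apply Rmult_le_pos; lra. }
  exists (p, pred N).
  assert (HSN : S (pred N) = N) by lia.
  assert (Hc : 0 <= x - INR p * t < t).
  { replace (x - INR p * t) with ((x * INR N - INR p) * t).
    2:{ replace x with (x * (INR N * t)) at 2 by (rewrite HNt; ring). ring. }
    split; [apply Rmult_le_pos; lra|].
    replace t with (1 * t) at 2 by ring. apply Rmult_lt_compat_r; lra. }
  split; [apply Bs_open|].
  unfold Bs; cbn [fst snd]; rewrite HSN; fold t. split.
  - exists x. split; auto. apply Rabs_def1; lra.
  - intros y [Hy Hyc]. apply Hball; auto.
    replace (y - x) with ((y - INR p * t) - (x - INR p * t)) by ring.
    eapply Rle_lt_trans; [apply Rabs_triang|]. rewrite Rabs_Ropp.
    rewrite (Rabs_right (x - INR p * t)) by lra.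
    assert (t < r/2) by (unfold t; lra). lra.
Qed.

Definition Uk (k : nat) := Bs (of_nat (fst (of_nat k))).
Definition Vk (k : nat) := Bs (of_nat (snd (of_nat k))).

Definition Ok (k : nat) (g : R -> R) : Prop :=
  openI (Uk k) -> openI (Vk k) -> (exists x, Uk k x) -> (exists y, Vk k y) ->
  exists n : nat, (1 <= n)%nat /\ exists x, Uk k x /\ Vk k (Nat.iter n g x).

Lemma TI_Ok g k : TI g -> Ok k g.
Proof. intros [_ Ht]. unfold Ok. intros. apply Ht; auto. Qed.

Lemma Ok_trans g : (forall k, Ok k g) -> transitive g.
Proof.
  intros H U V HU HV HUne HVne.
  destruct (basis U HU HUne) as [a [Ha1 [Ha2 Ha3]]].
  destruct (basis V HV HVne) as [b [Hb1 [Hb2 Hb3]]].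
  set (k := to_nat (to_nat a, to_nat b)).
  assert (HUk : Uk k = Bs a) by (unfold Uk, k; rewrite cancel_of_to; simpl; rewrite cancel_of_to; reflexivity).
  assert (HVk : Vk k = Bs b) by (unfold Vk, k; rewrite cancel_of_to; simpl; rewrite cancel_of_to; reflexivity).
  specialize (H k). unfold Ok in H. rewrite HUk, HVk in H.
  destruct (H Ha1 Hb1 Ha2 Hb2) as [n [Hn [x [Hx1 Hx2]]]].
  exists n; split; auto. exists x; split; auto.
Qed.

Lemma iter_inI f n x : inC f -> inI x -> inI (Nat.iter n f x).
Proof.
  intros [Hf _] Hx. induction n; simpl; auto.
Qed.

Lemma iter_cont f x n : inC f -> inI x -> forall eps, 0 < eps ->
  exists del, 0 < del /\ forall h, inC h -> (forall y, inI y -> Rabs (f y - h y) <= del) ->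
    Rabs (Nat.iter n h x - Nat.iter n f x) < eps.
Proof.
  intros Hf Hx. induction n; intros eps He.
  - exists 1. split; [lra|]. intros. simpl. rewrite Rminus_diag, Rabs_R0. auto.
  - destruct Hf as [HfI Hfc] eqn:HH.
    destruct (Hfc (Nat.iter n f x) (iter_inI f n x Hf Hx) (eps/2) ltac:(lra)) as [eta [Heta Hcont]].
    destruct (IHn eta Heta) as [d1 [Hd1 Hi]].
    exists (Rmin d1 (eps/4)). split; [apply Rmin_pos; lra|].
    intros h Hh Hclose. simpl.
    assert (HhI : inI (Nat.iter n h x)) by (apply iter_inI; auto).
    assert (Hc1 : forall y, inI y -> Rabs (f y - h y) <= d1).
    { intros y Hy. eapply Rle_trans; [apply Hclose; auto| apply Rmin_l]. }
    specialize (Hi h Hh Hc1).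
    specialize (Hcont _ HhI Hi).
    specialize (Hclose _ HhI). pose proof (Rmin_r d1 (eps/4)).
    replace (h (Nat.iter n h x) - f (Nat.iter n f x)) with
      (- (f (Nat.iter n h x) - h (Nat.iter n h x)) + (f (Nat.iter n h x) - f (Nat.iter n f x))) by ring.
    eapply Rle_lt_trans; [apply Rabs_triang|]. rewrite Rabs_Ropp. lra.
Qed.

Lemma Ok_open f k : inC f -> Ok k f ->
  exists r, 0 < r <= 1 /\ forall h, inC h -> D f h < r -> Ok k h.
Proof.
  intros Hf Hok.
  destruct (classic (openI (Uk k) /\ openI (Vk k) /\ (exists x, Uk k x) /\ (exists y, Vk k y)))
    as [[H1 [H2 [H3 H4]]] | Hn].
  - destruct (Hok H1 H2 H3 H4) as [n [Hn [x [Hx1 Hx2]]]].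
    destruct H2 as [_ HVo]. destruct (HVo _ Hx2) as [s [Hs Hball]].
    assert (HxI : inI x) by (destruct H1 as [HI _]; auto).
    destruct (iter_cont f x n Hf HxI s Hs) as [del [Hdel Hit]].
    exists (Rmin del 1). split; [split; [apply Rmin_pos; lra | apply Rmin_r]|].
    intros h Hh HD _ _ _ _. exists n. split; auto. exists x. split; auto.
    apply Hball; [apply iter_inI; auto|]. apply Hit; auto.
    intros y Hy. eapply Rle_trans; [apply D_ub; auto|].
    pose proof (Rmin_l del 1). lra.
  - exists 1. split; [lra|]. intros h _ _ H1 H2 H3 H4. exfalso; apply Hn; auto.
Qed.

Definition Qual (O : (R -> R) -> Prop) f r : Prop :=
  0 <= r <= 1 /\ forall h, inC h -> D f h < r -> O h.

Definition rho O f := Sup (Qual O f).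

Lemma Qual0 O f : Qual O f 0.
Proof. split; [lra|]. intros h _ H. pose proof (D_nonneg f h). lra. Qed.

Lemma rho_nonneg O f : 0 <= rho O f.
Proof. apply Sup_nonneg; [exists 0; apply Qual0| intros x [H _]; lra]. Qed.

Lemma rho_le1 O f : rho O f <= 1.
Proof. apply Sup_le; [exists 0; apply Qual0| intros x [H _]; lra]. Qed.

Lemma rho_O O f : inC f -> 0 < rho O f -> O f.
Proof.
  intros Hf Hp. destruct (Sup_pos _ 1 (fun x H => proj2 (proj1 H)) Hp) as [r [[_ Hr] Hr0]].
  apply Hr; auto. rewrite D_self; auto.
Qed.

Lemma rho_lip O f g : inC f -> inC g -> rho O f <= rho O g + D f g.
Proof.
  intros Hf Hg. apply Sup_le; [exists 0; apply Qual0|].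
  intros r [Hr1 Hr2].
  destruct (Rle_dec r (D f g)).
  - pose proof (rho_nonneg O g). lra.
  - assert (Qual O g (r - D f g)).
    { pose proof (D_nonneg f g). split; [lra|].
      intros h Hh Hgh. apply Hr2; auto. pose proof (D_tri f g h Hf Hg Hh). lra. }
    assert (r - D f g <= rho O g) by (apply Sup_ub with 1; auto; intros x [Hx _]; lra).
    lra.
Qed.

Lemma rho_pos f k : inC f -> Ok k f -> 0 < rho (Ok k) f.
Proof.
  intros Hf Hok. destruct (Ok_open f k Hf Hok) as [r [Hr Hq]].
  assert (r <= rho (Ok k) f).
  { apply Sup_ub with 1; [intros x [Hx _]; lra|]. split; [lra|]. auto. }
  lra.
Qed.

Definition e k f g := Rmin 1 (Rabs (/ rho (Ok k) f - / rho (Ok k) g)).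
Definition w k := / INR (S k).

Lemma w_pos k : 0 < w k.
Proof. unfold w. apply Rinv_0_lt_compat, INRS_pos. Qed.
Lemma w_le1 k : w k <= 1.
Proof.
  unfold w. rewrite <- Rinv_1. apply Rinv_le_contravar; [lra|].
  rewrite S_INR. pose proof (pos_INR k). lra.
Qed.

Lemma e_nonneg k f g : 0 <= e k f g.
Proof. unfold e, Rmin. destruct (Rle_dec _ _); [lra|]. apply Rabs_pos. Qed.
Lemma e_le1 k f g : e k f g <= 1.
Proof. unfold e. apply Rmin_l. Qed.
Lemma e_sym k f g : e k f g = e k g f.
Proof. unfold e. rewrite Rabs_minus_sym. auto. Qed.
Lemma e_tri k f g h : e k f h <= e k f g + e k g h.
Proof.
  unfold e. set (a := / rho (Ok k) f). set (b := / rho (Ok k) g). set (c := / rho (Ok k) h).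
  assert (Rabs (a - c) <= Rabs (a - b) + Rabs (b - c)).
  { replace (a - c) with ((a - b) + (b - c)) by ring. apply Rabs_triang. }
  pose proof (Rabs_pos (a - b)). pose proof (Rabs_pos (b - c)).
  unfold Rmin; repeat destruct (Rle_dec _ _); lra.
Qed.

Lemma ew_bound k f g : 0 <= e k f g * w k <= 1.
Proof.
  pose proof (e_nonneg k f g). pose proof (e_le1 k f g). pose proof (w_pos k). pose proof (w_le1 k).
  split; [apply Rmult_le_pos; lra|]. replace 1 with (1 * 1) by ring.
  apply Rmult_le_compat; lra.
Qed.

Definition Ep f g := Sup (fun r => exists k, r = e k f g * w k).

Lemma Ep_ub f g k : e k f g * w k <= Ep f g.
Proof.
  apply Sup_ub with 1; [|eauto]. intros x [j ->]. apply ew_bound.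
Qed.

Lemma Ep_le f g B : (forall k, e k f g * w k <= B) -> Ep f g <= B.
Proof.
  intros H. apply Sup_le; [exists (e 0 f g * w 0); eauto|]. intros x [j ->]; auto.
Qed.

Lemma Ep_nonneg f g : 0 <= Ep f g.
Proof.
  apply Sup_nonneg; [exists (e 0 f g * w 0); eauto|]. intros x [j ->]; apply ew_bound.
Qed.

Lemma Ep_sym f g : Ep f g = Ep g f.
Proof.
  apply Rle_antisym; apply Ep_le; intros k; rewrite e_sym; apply Ep_ub.
Qed.

Lemma Ep_tri f g h : Ep f h <= Ep f g + Ep g h.
Proof.
  apply Ep_le. intros k. pose proof (e_tri k f g h). pose proof (w_pos k).
  pose proof (Ep_ub f g k). pose proof (Ep_ub g h k).
  assert (e k f h * w k <= (e k f g + e k g h) * w k) by (apply Rmult_le_compat_r; lra).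
  lra.
Qed.

Definition dd f g := D f g + Ep f g.

Lemma minpos f : inC f -> (forall k, Ok k f) -> forall K, exists m, 0 < m /\
  forall k, (k < K)%nat -> m <= rho (Ok k) f.
Proof.
  intros Hf Hok. induction K.
  - exists 1. split; [lra|]. intros; lia.
  - destruct IHK as [m [Hm HK]].
    exists (Rmin m (rho (Ok K) f)). split; [apply Rmin_pos; auto; apply rho_pos; auto|].
    intros k Hk. destruct (Nat.eq_dec k K) as [->|Hne]; [apply Rmin_r|].
    eapply Rle_trans; [apply Rmin_l|]. apply HK; lia.
Qed.

Lemma inv_diff m a b t : 0 < m -> m <= a -> m / 2 <= b -> Rabs (a - b) <= t ->
  Rabs (/ a - / b) <= 2 * t / (m * m).
Proof.
  intros Hm Ha Hb Ht.
  assert (Hab : 0 < a * b) by (apply Rmult_lt_0_compat; lra).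
  replace (/ a - / b) with ((b - a) * / (a * b)) by (field; lra).
  rewrite Rabs_mult, Rabs_minus_sym, (Rabs_right (/ (a * b))).
  2:{ apply Rle_ge, Rlt_le, Rinv_0_lt_compat; auto. }
  assert (/ (a * b) <= 2 / (m * m)).
  { replace (2 / (m * m)) with (/ (m * m / 2)) by (field; lra).
    apply Rinv_le_contravar; [nra|]. nra. }
  pose proof (Rabs_pos (a - b)).
  apply Rle_trans with (t * (2 / (m * m))).
  - apply Rmult_le_compat; try lra. apply Rlt_le, Rinv_0_lt_compat; auto.
  - right; unfold Rdiv; ring.
Qed.

Lemma cont_d f : inC f -> (forall k, Ok k f) -> forall eps, 0 < eps ->
  exists del, 0 < del /\ forall g, inC g -> D f g < del -> dd f g < eps.
Proof.
  intros Hf Hok eps He.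
  destruct (archimed_cor1 (eps/2) ltac:(lra)) as [K [HK HK0]].
  destruct (minpos f Hf Hok K) as [m [Hm Hmin]].
  set (del := Rmin (eps/2) (Rmin (m/2) (eps*m*m/4))).
  assert (Hd1 : del <= eps/2) by apply Rmin_l.
  assert (Hd2 : del <= m/2) by (eapply Rle_trans; [apply Rmin_r| apply Rmin_l]).
  assert (Hd3 : del <= eps*m*m/4) by (eapply Rle_trans; [apply Rmin_r| apply Rmin_r]).
  assert (Hmm : 0 < m * m) by nra.
  exists del. split.
  { apply Rmin_pos; [lra| apply Rmin_pos; [lra|]]. nra. }
  intros g Hg HD.
  assert (Ep f g <= eps/2).
  { apply Ep_le. intros k. destruct (Compare_dec.lt_dec k K) as [Hk|Hk].
    - pose proof (Hmin k Hk). pose proof (rho_lip (Ok k) f g Hf Hg).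
      pose proof (rho_lip (Ok k) g f Hg Hf). rewrite (D_sym g f) in H1 by auto.
      pose proof (D_nonneg f g).
      assert (Rabs (/ rho (Ok k) f - / rho (Ok k) g) <= 2 * D f g / (m * m)).
      { apply inv_diff; try lra. apply Rabs_le; lra. }
      assert (2 * D f g / (m * m) <= eps / 2).
      { unfold Rdiv. apply Rle_trans with (2 * (eps * m * m / 4) * / (m * m)).
        - apply Rmult_le_compat_r; [apply Rlt_le, Rinv_0_lt_compat; auto| lra].
        - right. field. lra. }
      assert (e k f g <= eps/2) by (unfold e; eapply Rle_trans; [apply Rmin_r| lra]).
      pose proof (e_nonneg k f g). pose proof (w_pos k). pose proof (w_le1 k).
      assert (e k f g * w k <= e k f g * 1) by (apply Rmult_le_compat_l; lra). lra.
    - assert (w k <= / INR K).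
      { unfold w. apply Rinv_le_contravar; [apply lt_0_INR; lia| apply le_INR; lia]. }
      pose proof (e_le1 k f g). pose proof (e_nonneg k f g). pose proof (w_pos k).
      assert (e k f g * w k <= 1 * w k) by (apply Rmult_le_compat_r; lra). lra. }
  unfold dd. lra.
Qed.

Lemma dd_sym f g : inC f -> inC g -> dd f g = dd g f.
Proof. intros. unfold dd. rewrite D_sym, Ep_sym by auto. auto. Qed.

Lemma TI_cm : completely_metrizable TI.
Proof.
  exists dd.
  assert (HC : forall f, TI f -> inC f) by (intros f [H _]; auto).
  split; [intros; unfold dd; pose proof (D_nonneg f g); pose proof (Ep_nonneg f g); lra|].
  split.
  { intros f g Hf Hg. split.
    - intros H. apply D_eqI; auto. unfold dd in H.
      pose proof (D_nonneg f g); pose proof (Ep_nonneg f g); lra.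
    - intros H. assert (HD : D f g = 0) by (apply D_eqI; auto).
      assert (HD' : D g f = 0) by (rewrite D_sym; auto).
      assert (Ep f g = 0).
      { apply Rle_antisym; [|apply Ep_nonneg]. apply Ep_le. intros k.
        assert (rho (Ok k) f = rho (Ok k) g).
        { pose proof (rho_lip (Ok k) f g (HC _ Hf) (HC _ Hg)).
          pose proof (rho_lip (Ok k) g f (HC _ Hg) (HC _ Hf)). lra. }
        unfold e. rewrite H0, Rminus_diag, Rabs_R0.
        unfold Rmin; destruct (Rle_dec _ _); lra. }
      unfold dd; lra. }
  split; [intros; apply dd_sym; auto|].
  split.
  { intros f g h Hf Hg Hh. unfold dd.
    pose proof (D_tri f g h (HC _ Hf) (HC _ Hg) (HC _ Hh)). pose proof (Ep_tri f g h). lra. }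
  split.
  { intros f Hf eps He.
    destruct (cont_d f (HC _ Hf) (fun k => TI_Ok f k Hf) eps He) as [del [Hd Hc]].
    exists (del/2). split; [lra|]. intros g Hg Hcl.
    apply Hc; [auto|]. assert (D f g <= del/2) by (apply D_le; auto). lra. }
  split.
  { intros f Hf eps He. exists eps. split; auto. intros g Hg Hd x Hx.
    unfold dd in Hd. pose proof (Ep_nonneg f g).
    pose proof (D_ub f g x (HC _ Hf) (HC _ Hg) Hx). lra. }
  intros u Hu Hc.
  assert (HuC : forall n, inC (u n)) by (intros; apply HC; auto).
  assert (HcD : forall eps, 0 < eps -> exists N, forall m n, (N <= m)%nat -> (N <= n)%nat ->
     D (u m) (u n) < eps).
  { intros eps He. destruct (Hc eps He) as [N HN]. exists N. intros m n Hm Hn.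
    specialize (HN m n Hm Hn). unfold dd in HN. pose proof (Ep_nonneg (u m) (u n)). lra. }
  destruct (complete_C u HuC HcD) as [Hg Hunif].
  set (g := limf u) in *.
  assert (Hok : forall k, Ok k g).
  { intros k. apply rho_O; auto.
    pose proof (w_pos k) as Hw.
    destruct (Hc (w k / 2) ltac:(lra)) as [N HN].
    assert (Hb : forall n, (N <= n)%nat ->
      / rho (Ok k) (u n) <= / rho (Ok k) (u N) + 1/2).
    { intros n Hn. specialize (HN n N Hn (le_n _)). unfold dd in HN.
      pose proof (D_nonneg (u n) (u N)). pose proof (Ep_ub (u n) (u N) k).
      assert (e k (u n) (u N) < 1/2).
      { apply Rnot_le_lt; intro Hle.
        assert (1/2 * w k <= e k (u n) (u N) * w k) by (apply Rmult_le_compat_r; lra).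
        lra. }
      unfold e in H1. unfold Rmin in H1. destruct (Rle_dec _ _) in H1; [lra|].
      apply Rabs_lt_between in H1. lra. }
    set (M := / rho (Ok k) (u N) + 1/2).
    assert (HrN : 0 < rho (Ok k) (u N)) by (apply rho_pos; auto; apply TI_Ok; auto).
    assert (HM : 0 < M) by (unfold M; pose proof (Rinv_0_lt_compat _ HrN); lra).
    destruct (Hunif (/ M / 2)) as [N2 HN2].
    { pose proof (Rinv_0_lt_compat _ HM). lra. }
    set (n := max N N2).
    assert (Hrn : 0 < rho (Ok k) (u n)) by (apply rho_pos; auto; apply TI_Ok; auto).
    assert (H1 : / M <= rho (Ok k) (u n)).
    { rewrite <- (Rinv_inv (rho (Ok k) (u n))). apply Rinv_le_contravar.
      - apply Rinv_0_lt_compat; auto.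
      - apply Hb. unfold n; lia. }
    assert (H2 : D (u n) g <= / M / 2) by (apply D_le; apply HN2; unfold n; lia).
    pose proof (rho_lip (Ok k) (u n) g (HuC n) Hg). lra. }
  assert (HTg : TI g) by (split; auto; apply Ok_trans; auto).
  exists g. split; auto.
  intros eps He. destruct (cont_d g Hg Hok eps He) as [del [Hd Hcd]].
  destruct (Hunif (del/2) ltac:(lra)) as [N HN]. exists N. intros n Hn.
  rewrite dd_sym by auto. apply Hcd; auto.
  rewrite D_sym by auto. assert (D (u n) g <= del/2) by (apply D_le; apply HN; auto). lra.
Qed.

Theorem theorem4 : completely_metrizable TI /\ completely_metrizable TI_closure.
Proof. split; [apply TI_cm | apply closure_cm]. Qed.
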